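(* For every sentence $\alpha$ there is a sentence $\gamma$ in assignment normal form such that $\alpha\leftrightarrow\gamma$ is a theorem of $\mathbf{LEL}$.
   Context: Fix a nonempty finite set $\mathbf{A}$ of agents, a countable set $\mathbf{X}$ of variables disjoint from $\mathbf{A}$, and a countable set $\mathbf{P}$ of predicate letters. Formulas and free variables: $\phi ::= p_x \mid \top \mid \neg\phi \mid (\phi\wedge\phi) \mid [x:=a]\phi \mid \mathsf{K}_X\alpha$ ($p\in\mathbf{P}$, $x\in\mathbf{X}$, $a\in\mathbf{A}$, $X\subseteq\mathbf{X}$ finite possibly empty, $\alpha$ with no free variables), $FV(p_x)=\{x\}$, $FV(\top)=\emptyset$, $FV(\neg\phi)=FV(\phi)$, $FV(\phi\wedge\psi)=FV(\phi)\cup FV(\psi)$, $FV([x:=a]\phi)=FV(\phi)\setminus\{x\}$, $FV(\mathsf{K}_X\alpha)=X$. Sentences have no free variables. $\bot:=\neg\top$, $\langle x:=a\rangle\phi:=\neg[x:=a]\neg\phi$. $\phi[y/x]$ replaces free occurrences of $x$ by $y$ (including in index sets of $\mathsf{K}_X$); admissible if $x$ has no free occurrence within the scope of any $[y:=b]$. $[\vec{x}:=\vec{a}]\phi$ abbreviates $[x_1:=a_1]\cdots[x_n:=a_n]\phi$ for equal-length strings $\vec x,\vec a$, $\mathsf{K}_{\vec x}:=\mathsf{K}_{\{x_1,\dots,x_n\}}$, $\mathsf{K}_x:=\mathsf{K}_{\{x\}}$, $\{\vec a\}=\{a_1,\dots,a_n\}$. $\mathbf{LEL}$: axioms — propositional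 tautologies; $\mathsf{K}_X(\alpha\to\beta)\to(\mathsf{K}_X\alpha\to\mathsf{K}_X\beta)$; $\mathsf{K}_X\alpha\to\mathsf{K}_Y\alpha$ ($X\subseteq Y$); $[x:=a](\phi\to\psi)\to([x:=a]\phi\to[x:=a]\psi)$; $\langle x:=a\rangle\phi\to[x:=a]\phi$; $\phi\to[x:=a]\phi$ ($x\notin FV(\phi)$); $[y:=a]([x:=a]\phi\to\phi[y/x])$ ($\phi[y/x]$ admissible); $[x:=a][y:=b]\phi\to[y:=b][x:=a]\phi$ ($x\neq y$); $\bigwedge_{a\in\mathbf{A}}[x:=a]\phi\to\phi$; $\mathsf{K}_X\alpha\to\alpha$; $[\vec{x}:=\vec{a}](\neg\mathsf{K}_{\vec{x}}\alpha\to\mathsf{K}_{\vec{x}}[\vec{x}:=\vec{a}]\neg\mathsf{K}_{\vec{x}}\alpha)$; $[x:=a]\mathsf{K}_{x}\langle x:=a\rangle\top$; $[x:=a](p_x\to\mathsf{K}_{x}[x:=a]p_x)$; $[\vec{x}:=\vec{a}](\bigwedge_{b\in B}[x:=b]\bot\to\mathsf{K}_{\vec{x}}\bigwedge_{b\in B}[x:=b]\bot)$ with $B=\mathbf{A}\setminus\{\vec a\}$. Rules: modus ponens; from sentence $\alpha$ infer $\mathsf{K}_\emptyset\alpha$; from $\phi$ infer $[x:=a]\phi$. ($\alpha,\beta$ sentences; $\phi,\psi$ formulas.) The sentences in assignment normal form are generated by $\gamma ::= [x:=a]p_x \mid [x:=a]\bot \mid \top \mid \neg\gamma \mid (\gamma\wedge\gamma)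 \mid [\vec{x}:=\vec{a}]\mathsf{K}_{\vec{x}}\gamma$ (with $x\in\mathbf{X}$, $a\in\mathbf{A}$, $p\in\mathbf{P}$, and $\vec x,\vec a$ strings of variables and agents of equal length). *)

(* Defs.v *)
From HB Require Import structures.
From mathcomp Require Import all_boot.
From mathcomp Require Import finmap.

Set Implicit Arguments.
Unset Strict Implicit.
Unset Printing Implicit Defensive.

Local Open Scope fset_scope.

Section LEL.

(* A : agents (finite; nonemptiness is a hypothesis of the theorem),
   X : variables, P : predicate letters.  A and X are separate types,
   hence disjoint. *)
Variables (A : finType) (X : countType) (P : countType).

(* Raw formulas:  p_x | T | ~f | f /\ g | [x:=a] f | K_Y f.
   The side condition "the argument of K is a sentence" is imposed by [wf]. *)
Inductive form : Type :=
| FPred of P & X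
| FTop
| FNeg of form
| FAnd of form & form
| FAs of X & A & form
| FK of {fset X} & form.

Fixpoint fv (f : form) : {fset X} :=
  match f with
  | FPred _ x => [fset x]
  | FTop => fset0
  | FNeg g => fv g
  | FAnd g h => fv g `|` fv h
  | FAs x _ g => fv g `\ x
  | FK Y _ => Y
  end.

Fixpoint wf (f : form) : bool :=
  match f with
  | FPred _ _ | FTop => true
  | FNeg g => wf g
  | FAnd g h => wf g && wf h
  | FAs _ _ g => wf g
  | FK _ g => wf g && (fv g == fset0)
  end.

Definition sentence (f : form) : Prop := wf f /\ fv f = fset0.

Definition FBot : form := FNeg FTop.
Definition FImp (f g : form) : form := FNeg (FAnd f (FNeg g)).
Definition FIff (f g : form) : form := FAnd (FImp f g) (FImp g f).
Definition FDia (x : X) (a : A) (f : form) : form := FNeg (FAs x a (FNeg f)).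

Definition bigAnd (l : seq form) : form := foldr FAnd FTop l.

Fixpoint vAs (s : seq (X * A)) (f : form) : form :=
  match s with
  | [::] => f
  | (x, a) :: s' => FAs x a (vAs s' f)
  end.

Definition vars_of (s : seq (X * A)) : {fset X} := [fset p.1 | p in s].
Definition vK (s : seq (X * A)) (f : form) : form := FK (vars_of s) f.

Definition others (s : seq (X * A)) : {set A} :=
  [set b | b \notin [seq p.2 | p <- s]].

Fixpoint subst (y x : X) (f : form) : form :=
  match f with
  | FPred p z => FPred p (if z == x then y else z)
  | FTop => FTop
  | FNeg g => FNeg (subst y x g)
  | FAnd g h => FAnd (subst y x g) (subst y x h)
  | FAs z a g => if z == x then FAs z a g else FAs z a (subst y x g)
  | FK Y g => FK (if x \in Y then y |` (Y `\ x) else Y) g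
  end.

Fixpoint admissible (y x : X) (f : form) : bool :=
  match f with
  | FPred _ _ | FTop | FK _ _ => true
  | FNeg g => admissible y x g
  | FAnd g h => admissible y x g && admissible y x h
  | FAs z _ g =>
      if z == x then true
      else if z == y then x \notin fv g
      else admissible y x g
  end.

(* propositional valuation: non-boolean subformulas are atoms *)
Fixpoint tval (v : form -> bool) (f : form) : bool :=
  match f with
  | FTop => true
  | FNeg g => ~~ tval v g
  | FAnd g h => tval v g && tval v h
  | _ => v f
  end.

Definition tautology (f : form) : Prop := forall v, tval v f.

(* axiom schemas of LEL (sentence side conditions are enforced via [wf]) *)
Inductive lel_axiom : form -> Prop :=
| AxTaut f : tautology f -> lel_axiom f
| AxKdist Y a b :
    lel_axiom (FImp (FK Y (FImp a b)) (FImp (FK Y a) (FK Y b)))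
| AxKmono Y Z a : Y `<=` Z -> lel_axiom (FImp (FK Y a) (FK Z a))
| AxAsDist x a f g :
    lel_axiom (FImp (FAs x a (FImp f g)) (FImp (FAs x a f) (FAs x a g)))
| AxAsFun x a f : lel_axiom (FImp (FDia x a f) (FAs x a f))
| AxAsVac x a f : x \notin fv f -> lel_axiom (FImp f (FAs x a f))
| AxAsSubst y x a f :
    admissible y x f -> lel_axiom (FAs y a (FImp (FAs x a f) (subst y x f)))
| AxAsComm x y a b f :
    x != y -> lel_axiom (FImp (FAs x a (FAs y b f)) (FAs y b (FAs x a f)))
| AxAsCover x f :
    lel_axiom (FImp (bigAnd [seq FAs x a f | a <- enum A]) f)
| AxKT Y a : lel_axiom (FImp (FK Y a) a)
| AxKNeg s a :
    lel_axiom (vAs s (FImp (FNeg (vK s a)) (vK s (vAs s (FNeg (vK s a))))))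
| AxKAs x a : lel_axiom (FAs x a (FK [fset x] (FDia x a FTop)))
| AxKPred x a p :
    lel_axiom (FAs x a (FImp (FPred p x) (FK [fset x] (FAs x a (FPred p x)))))
| AxKOthers s x :
    lel_axiom (vAs s (FImp (bigAnd [seq FAs x b FBot | b <- enum (others s)])
                           (vK s (bigAnd [seq FAs x b FBot | b <- enum (others s)])))).

Inductive lel_thm : form -> Prop :=
| ThAx f : wf f -> lel_axiom f -> lel_thm f
| ThMP f g : lel_thm f -> lel_thm (FImp f g) -> lel_thm g
| ThNec a : fv a = fset0 -> lel_thm a -> lel_thm (FK fset0 a)
| ThAs x a f : lel_thm f -> lel_thm (FAs x a f).

Inductive anf : form -> Prop :=
| AnfPred x a p : anf (FAs x a (FPred p x))
| AnfBot x a : anf (FAs x a FBot)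
| AnfTop : anf FTop
| AnfNeg g : anf g -> anf (FNeg g)
| AnfAnd g h : anf g -> anf h -> anf (FAnd g h)
| AnfK s g : anf g -> anf (vAs s (vK s g)).

End LEL.

Arguments FTop {A X P}.
Arguments FBot {A X P}.

(* Main.v *)
Require Import Defs.
From HB Require Import structures.
From mathcomp Require Import all_boot.
From mathcomp Require Import finmap.

Set Implicit Arguments.
Unset Strict Implicit.
Unset Printing Implicit Defensive.
Local Open Scope fset_scope.

Section Proof.
Variables (A : finType) (X P : countType).
Notation F := (form A X P).
Notation thm := (@lel_thm A X P).
Implicit Types (s : seq (X * A)) (f g h : F).

Definition FOr (f g : F) : F := FNeg (FAnd (FNeg f) (FNeg g)).

Ltac taut := let v := fresh "v" in move=> v;
  rewrite /Defs.tautology; cbv delta [FIff FImp FOr FDia FBot]; simpl;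
  repeat (match goal with |- context [Defs.tval v ?f] => case: (Defs.tval v f)
   | |- context [v ?f] => case: (v f) end); done.

Lemma thm_wf f : thm f -> wf f.
Proof.
elim=> {f} [f W _ | f g _ Hf _ /andP[_ Hg] | a Ha _ Wa | y b f _ Wf] //=.
by rewrite Wa Ha eqxx.
Qed.

Lemma taut_thm f : wf f -> tautology f -> thm f.
Proof. by move=> W T; apply: ThAx W (AxTaut T). Qed.

Lemma tmp1 f g : thm f -> wf g -> tautology (FImp f g) -> thm g.
Proof.
move=> Hf Wg T; apply: (ThMP Hf); apply: taut_thm T => /=.
by rewrite (thm_wf Hf) Wg.
Qed.

Lemma tmp2 f g h : thm f -> thm g -> wf h -> tautology (FImp f (FImp g h)) -> thm h.
Proof.
move=> Hf Hg Wh T; apply: (ThMP Hg); apply: (ThMP Hf); apply: taut_thm T => /=.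
by rewrite (thm_wf Hf) (thm_wf Hg) Wh.
Qed.

Lemma tmp3 f g k h : thm f -> thm g -> thm k -> wf h ->
  tautology (FImp f (FImp g (FImp k h))) -> thm h.
Proof.
move=> Hf Hg Hk Wh T; apply: (ThMP Hk); apply: (ThMP Hg); apply: (ThMP Hf).
apply: taut_thm T => /=.
by rewrite (thm_wf Hf) (thm_wf Hg) (thm_wf Hk) Wh.
Qed.

Lemma tmp4 f g k l h : thm f -> thm g -> thm k -> thm l -> wf h ->
  tautology (FImp f (FImp g (FImp k (FImp l h)))) -> thm h.
Proof.
move=> Hf Hg Hk Hl Wh T; apply: (ThMP Hl); apply: (ThMP Hk); apply: (ThMP Hg); apply: (ThMP Hf).
apply: taut_thm T => /=.
by rewrite (thm_wf Hf) (thm_wf Hg) (thm_wf Hk) (thm_wf Hl) Wh.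
Qed.

Ltac wfs := cbv delta [FIff FImp FOr FDia FBot]; simpl;
  repeat match goal with
  | H : thm ?f |- _ => have := thm_wf H; clear H; cbv delta [FIff FImp FOr FDia FBot]; simpl => ?
  end;
  repeat match goal with H : is_true (_ && _) |- _ => case/andP: H => ? ? end;
  repeat (apply/andP; split); try done.

Lemma iff_trans f g h : thm (FIff f g) -> thm (FIff g h) -> thm (FIff f h).
Proof. move=> H1 H2; apply: (tmp2 H1 H2); [wfs | taut]. Qed.

Lemma iff_sym f g : thm (FIff f g) -> thm (FIff g f).
Proof. move=> H1; apply: (tmp1 H1); [wfs | taut]. Qed.

Lemma iff_refl f : wf f -> thm (FIff f f).
Proof. move=> W; apply: taut_thm; [wfs|taut]. Qed.

Section Box.
Variables (x : X) (a : A).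
Notation B := (FAs x a).

Lemma box_mono f g : thm (FImp f g) -> thm (FImp (B f) (B g)).
Proof.
move=> H; apply: (ThMP (ThAs x a H)); apply: ThAx; last exact: AxAsDist.
have := thm_wf H => /= /andP[W1 W2]; by rewrite /= W1 W2.
Qed.

Lemma box_K2 f g h : thm (FImp f (FImp g h)) -> thm (FImp (B f) (FImp (B g) (B h))).
Proof.
move=> H; have H1 := box_mono H.
have H2 : thm (FImp (B (FImp g h)) (FImp (B g) (B h))).
  apply: ThAx; last exact: AxAsDist.
  have := thm_wf H => /= /andP[_ /andP[W1 W2]]; by rewrite /= W1 W2.
apply: (tmp2 H1 H2); [wfs|taut].
Qed.

Lemma box_iff f g : thm (FIff f g) -> thm (FIff (B f) (B g)).
Proof.
move=> H.
have H1 : thm (FImp f g) by apply: (tmp1 H); [wfs|taut].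
have H2 : thm (FImp g f) by apply: (tmp1 H); [wfs|taut].
apply: (tmp2 (box_mono H1) (box_mono H2)); [wfs|taut].
Qed.

Lemma box_and f g : wf f -> wf g -> thm (FIff (B (FAnd f g)) (FAnd (B f) (B g))).
Proof.
move=> Wf Wg.
have H1 : thm (FImp (B (FAnd f g)) (B f)) by apply: box_mono; apply: taut_thm; [wfs|taut].
have H2 : thm (FImp (B (FAnd f g)) (B g)) by apply: box_mono; apply: taut_thm; [wfs|taut].
have H3 : thm (FImp (B f) (FImp (B g) (B (FAnd f g)))) by apply: box_K2; apply: taut_thm; [wfs|taut].
apply: (tmp3 H1 H2 H3); [wfs|taut].
Qed.

Lemma box_fun f : wf f -> thm (FImp (FNeg (B f)) (B (FNeg f))).
Proof.
move=> Wf.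
have H1 : thm (FImp (FDia x a (FNeg f)) (B (FNeg f))) by apply: ThAx; [wfs|exact: AxAsFun].
have H2 : thm (FImp (B (FNeg (FNeg f))) (B f)) by apply: box_mono; apply: taut_thm; [wfs|taut].
apply: (tmp2 H1 H2); [wfs|taut].
Qed.

Lemma box_not f : wf f -> thm (FIff (B (FNeg f)) (FOr (B FBot) (FNeg (B f)))).
Proof.
move=> Wf.
have H1 : thm (FImp (B (FNeg f)) (FImp (B f) (B FBot))) by apply: box_K2; apply: taut_thm; [wfs|taut].
have H2 : thm (FImp (B FBot) (B (FNeg f))) by apply: box_mono; apply: taut_thm; [wfs|taut].
have H3 := box_fun Wf.
apply: (tmp3 H1 H2 H3); [wfs|taut].
Qed.

Lemma box_or f g : wf f -> wf g -> thm (FIff (B (FOr f g)) (FOr (B f) (B g))).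
Proof.
move=> Wf Wg.
have H1 : thm (FImp (B f) (B (FOr f g))) by apply: box_mono; apply: taut_thm; [wfs|taut].
have H2 : thm (FImp (B g) (B (FOr f g))) by apply: box_mono; apply: taut_thm; [wfs|taut].
have H3 : thm (FImp (B (FOr f g)) (FImp (B (FNeg f)) (B g))) by apply: box_K2; apply: taut_thm; [wfs|taut].
have H4 := box_fun Wf.
apply: (tmp4 H1 H2 H3 H4); [wfs|taut].
Qed.

Lemma box_vac f : wf f -> x \notin fv f -> thm (FIff (B f) (FOr (B FBot) f)).
Proof.
move=> Wf Hx.
have H1 : thm (FImp f (B f)) by apply: ThAx; [wfs|exact: AxAsVac].
have H2 : thm (FImp (FNeg f) (B (FNeg f))) by apply: ThAx; [wfs|exact: AxAsVac].
have H3 : thm (FImp (B FBot) (B f)) by apply: box_mono; apply: taut_thm; [wfs|taut].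
have H4 : thm (FImp (B (FNeg f)) (FImp (B f) (B FBot))) by apply: box_K2; apply: taut_thm; [wfs|taut].
apply: (tmp4 H1 H2 H3 H4); [wfs|taut].
Qed.

Lemma box_top : thm (B FTop).
Proof. by apply: ThAs; apply: taut_thm. Qed.

End Box.

Lemma in_vars z (s : seq (X * A)) : (z \in vars_of s) = (z \in map fst s).
Proof. by apply/imfsetP/mapP => [[p Hp ->]|[p Hp ->]]; exists p. Qed.

Lemma wf_vAs s f : wf (vAs s f) = wf f.
Proof. by elim: s => [|[y b] s IH] //=. Qed.

Lemma fv_vAs s f : fv (vAs s f) = fv f `\` vars_of s.
Proof.
elim: s => [|[y b] s IH] /=; apply/fsetP => z.
  by rewrite in_fsetD in_vars.
rewrite IH in_fsetD1 !in_fsetD !in_vars /=.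
by rewrite in_cons; case: (z == y).
Qed.

Lemma vAs_rcons s p f : vAs (rcons s p) f = vAs s (FAs p.1 p.2 f).
Proof. by elim: s => [|[y b] s IH] //=; [case: p | rewrite IH]. Qed.

Lemma vAs_mono s f g : thm (FImp f g) -> thm (FImp (vAs s f) (vAs s g)).
Proof. elim: s f g => [|[y b] s IH] f g H //=; apply: box_mono; exact: IH. Qed.

Lemma vAs_iff s f g : thm (FIff f g) -> thm (FIff (vAs s f) (vAs s g)).
Proof. elim: s f g => [|[y b] s IH] f g H //=; apply: box_iff; exact: IH. Qed.

Lemma vAs_top s : thm (vAs s FTop).
Proof. elim: s => [|[y b] s IH] /=; [exact: taut_thm | exact: ThAs]. Qed.

Lemma vAs_and s f g : wf f -> wf g ->
  thm (FIff (vAs s (FAnd f g)) (FAnd (vAs s f) (vAs s g))).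
Proof.
move=> Wf Wg; elim: s => [|[y b] s IH] /=; first by apply: taut_thm; [wfs|taut].
apply: iff_trans (box_iff y b IH) _; apply: box_and; by rewrite wf_vAs.
Qed.

Lemma vAs_not s f : wf f ->
  thm (FIff (vAs s (FNeg f)) (FOr (vAs s FBot) (FNeg (vAs s f)))).
Proof.
move=> Wf; elim: s => [|[y b] s IH] /=; first by apply: taut_thm; [wfs|taut].
have E1 := box_iff y b IH.
have E2 : thm (FIff (FAs y b (FOr (vAs s FBot) (FNeg (vAs s f))))
   (FOr (FAs y b (vAs s FBot)) (FAs y b (FNeg (vAs s f))))).
  by apply: box_or; rewrite /= wf_vAs.
have E3 : thm (FIff (FAs y b (FNeg (vAs s f))) (FOr (FAs y b FBot) (FNeg (FAs y b (vAs s f))))).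
  by apply: box_not; rewrite wf_vAs.
have E4 : thm (FImp (FAs y b FBot) (FAs y b (vAs s FBot))).
  apply: box_mono; apply: taut_thm; [wfs; by rewrite wf_vAs | taut].
apply: (tmp4 E1 E2 E3 E4); [wfs|taut].
Qed.

Definition bigOr (s : seq (X * A)) : F :=
  foldr (fun p acc => FOr (FAs p.1 p.2 FBot) acc) FBot s.

Lemma anf_or f g : anf f -> anf g -> anf (FOr f g).
Proof. by move=> Hf Hg; apply: AnfNeg; apply: AnfAnd; apply: AnfNeg. Qed.

Lemma anf_bigOr s : anf (bigOr s).
Proof.
elim: s => [|[y b] s IH] /=; first by apply: AnfNeg; apply: AnfTop.
by apply: anf_or => //; apply: AnfBot.
Qed.

Lemma wf_bigOr s : wf (bigOr s).
Proof. by elim: s => [|[y b] s IH] //=; rewrite IH. Qed.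

Lemma vAs_bot s : thm (FIff (vAs s FBot) (bigOr s)).
Proof.
elim: s => [|[y b] s IH] /=; first by apply: taut_thm; [wfs|taut].
have E1 : thm (FIff (FAs y b (vAs s FBot)) (FOr (FAs y b FBot) (vAs s FBot))).
  apply: box_vac; first by rewrite wf_vAs.
  by rewrite fv_vAs in_fsetD in_fset0 andbF.
apply: (tmp2 E1 IH); [wfs|taut].
Qed.

Fixpoint red (Fs : {fset X}) (s : seq (X * A)) : seq (X * A) :=
  match s with
  | [::] => [::]
  | (y, b) :: s' => if (y \in Fs) && (y \notin vars_of s')
                    then (y, b) :: red Fs s' else red Fs s'
  end.

Lemma red_ok s f : wf f ->
  thm (FIff (vAs s f) (FOr (vAs s FBot) (vAs (red (fv f) s) f))).
Proof.
move=> Wf; elim: s => [|[y b] s IH] /=; first by apply: taut_thm; [wfs|taut].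
case: ifP => Hc /=.
  apply: iff_trans (box_iff y b IH) _; apply: box_or; by rewrite wf_vAs.
have E1 : thm (FIff (FAs y b (vAs s f)) (FOr (FAs y b FBot) (vAs s f))).
  apply: box_vac; first by rewrite wf_vAs.
  rewrite fv_vAs in_fsetD; move: Hc; by case: (y \in fv f); case: (y \in vars_of s).
have E3 : thm (FIff (FAs y b (vAs s FBot)) (FOr (FAs y b FBot) (vAs s FBot))).
  apply: box_vac; first by rewrite wf_vAs.
  by rewrite fv_vAs in_fsetD in_fset0 andbF.
apply: (tmp3 E1 IH E3); [wfs|taut].
Qed.

Lemma mem_red Fs s z : (z \in map fst (red Fs s)) = (z \in Fs) && (z \in map fst s).
Proof.
elim: s => [|[y b] s IH] /=; first by rewrite andbF.
rewrite in_cons; case: ifP => Hc; rewrite /= ?in_cons IH;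
  case: (eqVneq z y) => [->|] //=; move: Hc; rewrite in_vars;
  by case: (y \in Fs); case: (y \in map fst s).
Qed.

Lemma red1 x s : x \in map fst s -> exists a, red [fset x] s = [:: (x, a)].
Proof.
elim: s => [|[y b] s IH] //=; rewrite in_cons.
case Hx: (x \in map fst s).
  move=> _; have [a Ha] := IH Hx; exists a.
  suff -> : (y \in [fset x]) && (y \notin vars_of s) = false by [].
  by rewrite in_fset1 in_vars; case: eqP => //= ->; rewrite Hx.
rewrite orbF /= => /eqP Exy; subst y; exists b.
rewrite in_fset1 eqxx in_vars Hx /=.
case E: (red [fset x] s) => [|p r] //.
have : p.1 \in map fst (red [fset x] s) by rewrite E /= in_cons eqxx.
rewrite mem_red in_fset1 => /andP[/eqP Hp]; by rewrite Hp Hx.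
Qed.

Lemma vars_red Y s : Y `<=` vars_of s -> vars_of (red Y s) = Y.
Proof.
move=> /fsubsetP H; apply/fsetP => z; rewrite in_vars mem_red -in_vars.
case Hz: (z \in Y) => //=; exact: H.
Qed.

Lemma anf_sent g : anf g -> wf g /\ fv g = fset0.
Proof.
elim=> {g} /=.
- move=> x a p; split => //; apply/fsetP => z; rewrite in_fsetD1 in_fset1 in_fset0; by case: eqP.
- move=> x a; split => //; apply/fsetP => z; by rewrite in_fsetD1 in_fset0 andbF.
- by [].
- by [].
- by move=> g h _ [-> ->] _ [-> ->]; rewrite fsetU0.
- move=> s g _ [Wg Fg]; rewrite wf_vAs fv_vAs /= Wg Fg eqxx; split => //.
  by rewrite fsetDv.
Qed.

Lemma kimp Y f g : fv f = fset0 -> fv g = fset0 -> thm (FImp f g) ->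
  thm (FImp (FK Y f) (FK Y g)).
Proof.
move=> Ff Fg H.
have Ffg : fv (FImp f g) = fset0 by rewrite /= Ff Fg fsetU0.
have H1 := ThNec Ffg H.
have W := thm_wf H; move: (W) => /= /andP[Wf Wg].
have H2 : thm (FImp (FK fset0 (FImp f g)) (FK Y (FImp f g))).
  apply: ThAx; last by apply: AxKmono; exact: fsub0set.
  by rewrite /= Wf Wg Ff Fg fsetU0 eqxx.
have H3 : thm (FImp (FK Y (FImp f g)) (FImp (FK Y f) (FK Y g))).
  apply: ThAx; last exact: AxKdist.
  by rewrite /= Wf Wg Ff Fg fsetU0 eqxx.
apply: (tmp3 H1 H2 H3); [by rewrite /= Wf Wg Ff Fg eqxx | taut].
Qed.

Lemma kiff Y f g : fv f = fset0 -> fv g = fset0 -> thm (FIff f g) ->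
  thm (FIff (FK Y f) (FK Y g)).
Proof.
move=> Ff Fg H.
have H1 : thm (FImp f g) by apply: (tmp1 H); [wfs|taut].
have H2 : thm (FImp g f) by apply: (tmp1 H); [wfs|taut].
apply: (tmp2 (kimp Y Ff Fg H1) (kimp Y Fg Ff H2)); [wfs; by rewrite ?Ff ?Fg|taut].
Qed.

Lemma main phi : wf phi -> forall s, fv phi `<=` vars_of s ->
  exists gamma, anf gamma /\ thm (FIff (vAs s phi) gamma).
Proof.
elim: phi => [p x | | g IH | g IHg h IHh | x a g IH | Y g IH] /= W s Hs.
- have Hx : x \in map fst s.
    by rewrite -in_vars; move/fsubsetP: Hs; apply; rewrite in_fset1.
  have [a Ha] := red1 Hx.
  have E : thm (FIff (vAs s (@FPred A X P p x)) (FOr (vAs s FBot) (vAs (red (fv (@FPred A X P p x)) s) (@FPred A X P p x)))) by apply: red_ok.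
  rewrite /= Ha /= in E.
  exists (FOr (bigOr s) (FAs x a (@FPred A X P p x))); split.
    by apply: anf_or; [apply: anf_bigOr | apply: AnfPred].
  apply: (tmp2 E (vAs_bot s)); [wfs; exact: wf_bigOr | taut].
- exists FTop; split; first by constructor.
  apply: (tmp1 (vAs_top s)); [wfs; by rewrite wf_vAs | taut].
- have [gm [Ag Hg]] := IH W s Hs.
  have E := vAs_not s W.
  exists (FOr (bigOr s) (FNeg gm)); split.
    by apply: anf_or; [apply: anf_bigOr | apply: AnfNeg].
  have Wg := (anf_sent Ag).1.
  apply: (tmp3 E (vAs_bot s) Hg); [wfs; rewrite ?wf_bigOr ?Wg ?wf_vAs // | taut].
- case/andP: W => Wg Wh.
  have [g1 [A1 H1]] := IHg Wg s (fsubset_trans (fsubsetUl _ _) Hs).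
  have [h1 [A2 H2]] := IHh Wh s (fsubset_trans (fsubsetUr _ _) Hs).
  exists (FAnd g1 h1); split; first by constructor.
  apply: (tmp3 (vAs_and s Wg Wh) H1 H2); [wfs; by rewrite ?wf_vAs /= ?Wg ?Wh ?(anf_sent A1).1 ?(anf_sent A2).1 | taut].
- have Hs' : fv g `<=` vars_of (rcons s (x, a)).
    apply/fsubsetP => z Hz; rewrite in_vars map_rcons mem_rcons in_cons /=.
    case: eqP => //= Hzx; rewrite -in_vars; move/fsubsetP: Hs; apply.
    by rewrite in_fsetD1 Hz andbT; apply/eqP.
  have [gm [Ag Hg]] := IH W _ Hs'.
  by exists gm; rewrite vAs_rcons in Hg.
- case/andP: W => Wg /eqP Fg.
  have [gm [Ag Hg]] : exists gamma, anf gamma /\ thm (FIff (vAs [::] g) gamma).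
    by apply: IH => //; rewrite Fg fsub0set.
  have [Wgm Fgm] := anf_sent Ag.
  have E1 : thm (FIff (vAs s (FK Y g)) (vAs s (FK Y gm))) by apply: vAs_iff; apply: kiff.
  have E2 : thm (FIff (vAs s (FK Y gm)) (FOr (vAs s FBot) (vAs (red (fv (FK Y gm)) s) (FK Y gm)))).
    by apply: red_ok; rewrite /= Wgm Fgm eqxx.
  rewrite /= in E2.
  have Et : FK Y gm = vK (red Y s) gm by rewrite /vK vars_red.
  exists (FOr (bigOr s) (vAs (red Y s) (vK (red Y s) gm))); split.
    by apply: anf_or; [apply: anf_bigOr | apply: AnfK].
  rewrite -Et.
  apply: (tmp3 E1 E2 (vAs_bot s)); [wfs; by rewrite ?wf_vAs /= ?wf_bigOr ?Wgm ?Fgm ?eqxx | taut].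
Qed.
End Proof.

Theorem proposition6 (A : finType) (X P : countType) (hA : 0 < #|A|)
  (alpha : form A X P) :
  sentence alpha ->
  exists gamma : form A X P, anf gamma /\ lel_thm (FIff alpha gamma).
Proof.
case=> W F0.
have [gm [Ag H]] : exists gamma, anf gamma /\ lel_thm (FIff (vAs [::] alpha) gamma).
  by apply: main => //; rewrite F0 fsub0set.
by exists gm.
Qed.
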